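(* For $\lambda\in\mathbb R$ let $r_\lambda(x,y)=(x^2-y^2)^3+15\lambda x^2y^2(x^2-y^2)$. Then $r_0$ has unique signature $(3,3)$, $r_{1/5}=x^6-y^6$ has unique signature $(1,1)$, and for every $\lambda$ with $0<\lambda<\tfrac15$, $r_\lambda$ has unique signature $(2,2)$.
   Context: A representation of a real binary sextic $p$ is an expression $p=\sum_{j=1}^r\lambda_j(\alpha_jx+\beta_jy)^{6}$ with $r\ge0$, $\alpha_j,\beta_j\in\mathbb R$, $0\ne\lambda_j\in\mathbb R$; it is honest if the linear forms $\alpha_jx+\beta_jy$ are pairwise non-proportional. Its badge is $(a,b)$ where $a=\#\{j:\lambda_j>0\}$, $b=\#\{j:\lambda_j<0\}$; $\mathcal B(p)$ is the set of badges of honest representations. With $(a,b)\preceq(c,d)$ iff $a\le c,b\le d$, a signature is a minimal element of $\mathcal B(p)$; $p$ has unique signature $(u,v)$ if $(u,v)$ is the only minimal element. *)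

(* Defs.v *)
From Stdlib Require Import Reals List.
Import ListNotations.
Open Scope R_scope.

(* A binary real form is viewed as its polynomial function R -> R -> R
   (polynomials over R are determined by their values). *)
Definition binform := R -> R -> R.

(* A term (lambda, alpha, beta) stands for lambda * (alpha x + beta y)^6. *)
Definition term := (R * R * R)%type.
Definition lam (t : term) : R := fst (fst t).
Definition alp (t : term) : R := snd (fst t).
Definition bet (t : term) : R := snd t.

Definition term_val (t : term) (x y : R) : R :=
  lam t * (alp t * x + bet t * y) ^ 6.

Definition rep_val (L : list term) (x y : R) : R :=
  fold_right (fun t s => term_val t x y + s) 0 L.

Definition is_rep (p : binform) (L : list term) : Prop :=
  Forall (fun t => lam t <> 0) L /\ (forall x y, p x y = rep_val L x y).

Definition honest (L : list term) : Prop :=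
  ForallOrdPairs (fun t u => alp t * bet u - alp u * bet t <> 0) L.

Definition npos (L : list term) : nat :=
  length (filter (fun t => if Rlt_dec 0 (lam t) then true else false) L).
Definition nneg (L : list term) : nat :=
  length (filter (fun t => if Rlt_dec (lam t) 0 then true else false) L).

Definition in_badges (p : binform) (a b : nat) : Prop :=
  exists L, is_rep p L /\ honest L /\ npos L = a /\ nneg L = b.

Definition is_signature (p : binform) (u v : nat) : Prop :=
  in_badges p u v /\
  forall a b, in_badges p a b -> (a <= u)%nat -> (b <= v)%nat -> a = u /\ b = v.

Definition unique_signature (p : binform) (u v : nat) : Prop :=
  is_signature p u v /\ forall a b, is_signature p a b -> a = u /\ b = v.

Definition r_lam (l : R) : binform :=
  fun x y => (x^2 - y^2)^3 + 15 * l * x^2 * y^2 * (x^2 - y^2).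

(* Main.v *)
Require Import Defs.
From Stdlib Require Import Reals Lra Lia Psatz List.
Import ListNotations.
Open Scope R_scope.

Definition Phi (h0 h1 h2 h3 h4 h5 h6 : R) (f : R -> R -> R) : R :=
  ((-1/360)*h1 + (1/2700)*h2 + (1/960)*h3 + (-1/2160)*h4 + (-1/1440)*h5 + (1/720)*h6) * f 1 (-3)
+ ((1/40)*h1 + (-1/200)*h2 + (-1/120)*h3 + (1/180)*h4 + (1/360)*h5 + (-1/120)*h6) * f 1 (-2)
+ ((-1/8)*h1 + (1/20)*h2 + (13/960)*h3 + (-13/720)*h4 + (-1/288)*h5 + (1/48)*h6) * f 1 (-1)
+ (h0 + (-49/540)*h2 + (7/270)*h4 + (-1/36)*h6) * f 1 0
+ ((1/8)*h1 + (1/20)*h2 + (-13/960)*h3 + (-13/720)*h4 + (1/288)*h5 + (1/48)*h6) * f 1 1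
+ ((-1/40)*h1 + (-1/200)*h2 + (1/120)*h3 + (1/180)*h4 + (-1/360)*h5 + (-1/120)*h6) * f 1 2
+ ((1/360)*h1 + (1/2700)*h2 + (-1/960)*h3 + (-1/2160)*h4 + (1/1440)*h5 + (1/720)*h6) * f 1 3.

Definition Hval (h0 h1 h2 h3 h4 h5 h6 a b : R) : R :=
  h0*a^6 + h1*a^5*b + h2*a^4*b^2 + h3*a^3*b^3 + h4*a^2*b^4 + h5*a*b^5 + h6*b^6.

Lemma Phi_pow h0 h1 h2 h3 h4 h5 h6 c a b :
  Phi h0 h1 h2 h3 h4 h5 h6 (fun x y => c * (a*x+b*y)^6) = c * Hval h0 h1 h2 h3 h4 h5 h6 a b.
Proof. unfold Phi, Hval. field. Qed.

Lemma Phi_r h0 h1 h2 h3 h4 h5 h6 l :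
  Phi h0 h1 h2 h3 h4 h5 h6 (r_lam l) = h0 + (l - 1/5)*h2 + (1/5 - l)*h4 - h6.
Proof. unfold Phi, r_lam. field. Qed.

Lemma Phi_ext h0 h1 h2 h3 h4 h5 h6 f g :
  (forall x y, f x y = g x y) -> Phi h0 h1 h2 h3 h4 h5 h6 f = Phi h0 h1 h2 h3 h4 h5 h6 g.
Proof. intro H. unfold Phi. rewrite !H. reflexivity. Qed.

Lemma Phi_rep_le h0 h1 h2 h3 h4 h5 h6 L :
  (forall t, In t L -> lam t * Hval h0 h1 h2 h3 h4 h5 h6 (alp t) (bet t) <= 0) ->
  Phi h0 h1 h2 h3 h4 h5 h6 (rep_val L) <= 0.
Proof.
  induction L as [|t L IH]; intro H.
  - unfold Phi, rep_val; simpl. lra.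
  - assert (E : Phi h0 h1 h2 h3 h4 h5 h6 (rep_val (t :: L)) =
              Phi h0 h1 h2 h3 h4 h5 h6 (fun x y => lam t * (alp t * x + bet t * y)^6)
              + Phi h0 h1 h2 h3 h4 h5 h6 (rep_val L)).
    { unfold Phi. simpl. unfold term_val. ring. }
    rewrite E, Phi_pow.
    assert (H1 := H t (or_introl eq_refl)).
    assert (H2 : Phi h0 h1 h2 h3 h4 h5 h6 (rep_val L) <= 0).
    { apply IH. intros u Hu. apply H. right. exact Hu. }
    lra.
Qed.

Definition posb (t : term) : bool := if Rlt_dec 0 (lam t) then true else false.

Lemma in_pos t L : In t L -> 0 < lam t -> In t (filter posb L).
Proof.
  intros H Hp. apply filter_In. split; auto. unfold posb.
  destruct (Rlt_dec 0 (lam t)); [reflexivity| lra].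
Qed.

Lemma FOP_filter (P : term -> term -> Prop) f L :
  ForallOrdPairs P L -> ForallOrdPairs P (filter f L).
Proof.
  induction L as [|t L IH]; intro H; simpl; [constructor|].
  inversion H; subst.
  destruct (f t).
  - constructor; auto. apply Forall_forall. intros u Hu.
    apply filter_In in Hu. rewrite Forall_forall in H2. apply H2. tauto.
  - auto.
Qed.

Lemma rep_nonzero p L t : is_rep p L -> In t L -> lam t <> 0.
Proof. intros [H _] Hin. rewrite Forall_forall in H. auto. Qed.

Lemma contra l L h0 h1 h2 h3 h4 h5 h6 :
  is_rep (r_lam l) L ->
  (forall a b, 0 <= Hval h0 h1 h2 h3 h4 h5 h6 a b) ->
  (forall t, In t (filter posb L) -> Hval h0 h1 h2 h3 h4 h5 h6 (alp t) (bet t) = 0) ->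
  0 < h0 + (l - 1/5)*h2 + (1/5 - l)*h4 - h6 -> False.
Proof.
  intros Hr Hnn Hz Hpos.
  assert (Hle : Phi h0 h1 h2 h3 h4 h5 h6 (rep_val L) <= 0).
  { apply Phi_rep_le. intros t Ht.
    assert (Hn := rep_nonzero _ _ _ Hr Ht).
    destruct (Rlt_dec 0 (lam t)) as [Hp|Hp].
    - rewrite (Hz t (in_pos _ _ Ht Hp)). lra.
    - assert (lam t < 0) by lra. specialize (Hnn (alp t) (bet t)). nra. }
  rewrite <- (Phi_ext _ _ _ _ _ _ _ (r_lam l)) in Hle by (apply (proj2 Hr)).
  rewrite Phi_r in Hle. lra.
Qed.

Lemma npos_eq L : npos L = length (filter posb L).
Proof. reflexivity. Qed.

Lemma lower1 l L : is_rep (r_lam l) L -> (1 <= npos L)%nat.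
Proof.
  intro Hr. rewrite npos_eq.
  destruct (filter posb L) as [|t1 r] eqn:E; simpl; [|lia].
  exfalso. apply (contra l L 1 0 0 0 0 0 0 Hr).
  - intros a b. unfold Hval. assert (0 <= a^6) by (replace (a^6) with ((a^3)^2) by ring; nra). nra.
  - rewrite E. simpl. tauto.
  - lra.
Qed.

Lemma lower2 l L : l < 1/5 -> is_rep (r_lam l) L -> (2 <= npos L)%nat.
Proof.
  intros Hl Hr. rewrite npos_eq.
  destruct (filter posb L) as [|t1 [|t2 r]] eqn:E; simpl; [exfalso| exfalso | lia].
  - apply (contra l L 1 0 0 0 0 0 0 Hr).
    + intros a b. unfold Hval. assert (0 <= a^6) by (replace (a^6) with ((a^3)^2) by ring; nra). nra.
    + rewrite E. simpl. tauto.
    + lra.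
  - set (al := if Req_EM_T (alp t1) 0 then if Req_EM_T (bet t1) 0 then 0 else alp t1 else alp t1).
    set (be := if Req_EM_T (alp t1) 0 then if Req_EM_T (bet t1) 0 then 1 else bet t1 else bet t1).
    assert (Hnz : al <> 0 \/ be <> 0).
    { unfold al, be. destruct (Req_EM_T (alp t1) 0); [destruct (Req_EM_T (bet t1) 0)|]; auto with real. }
    assert (Hz1 : Hval (be^4) 0 (-2*al^2*be^2) 0 (al^4) 0 0 (alp t1) (bet t1) = 0).
    { unfold al, be. destruct (Req_EM_T (alp t1) 0) as [e1|e1]; [destruct (Req_EM_T (bet t1) 0) as [e2|e2]|];
      unfold Hval; try rewrite e1; try rewrite e2; ring. }
    apply (contra l L (be^4) 0 (-2*al^2*be^2) 0 (al^4) 0 0 Hr).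
    + intros a b. unfold Hval.
      replace (be ^ 4 * a ^ 6 + 0 * a ^ 5 * b + -2 * al ^ 2 * be ^ 2 * a ^ 4 * b ^ 2 + 0 * a ^ 3 * b ^ 3 +
        al ^ 4 * a ^ 2 * b ^ 4 + 0 * a * b ^ 5 + 0 * b ^ 6) with ((a*(be^2*a^2 - al^2*b^2))^2) by ring.
      apply pow2_ge_0.
    + rewrite E. simpl. intros t [<-|[]]. exact Hz1.
    + assert (Hp : 0 < al^2 \/ 0 < be^2).
      { destruct Hnz as [H|H]; [left|right]; simpl; rewrite Rmult_1_r; apply Rsqr_pos_lt; exact H. }
      assert (0 <= al^2 * be^2) by (apply Rmult_le_pos; apply pow2_ge_0).
      replace (al^4) with ((al^2)^2) by ring. replace (be^4) with ((be^2)^2) by ring.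
      assert (Hm : 0 < 1/5 - l) by lra.
      assert (0 <= (1/5-l)*(al^2*be^2)) by (apply Rmult_le_pos; lra).
      destruct Hp as [Hp|Hp].
      * assert (0 < (1/5-l)*(al^2*al^2)) by (apply Rmult_lt_0_compat; [lra| apply Rmult_lt_0_compat; lra]).
        assert (0 <= (be^2)^2) by apply pow2_ge_0. nra.
      * assert (0 < (be^2)^2) by (apply pow_lt; lra).
        assert (0 <= (1/5-l)*(al^2*al^2)) by (apply Rmult_le_pos; [lra| apply Rmult_le_pos; apply pow2_ge_0]). nra.
Qed.

Lemma quad_pos A B C : A*C < B^2 -> exists s t, 0 < A*s^2 + 2*B*s*t + C*t^2.
Proof.
  intro H. destruct (Rlt_dec 0 A) as [HA|HA].
  - exists 1, 0. lra.
  - destruct (Req_EM_T A 0) as [HA0|HA0].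
    + subst A. assert (HB : B <> 0) by (intro; subst; lra).
      exists ((1 - C)/(2*B)), 1.
      replace (0 * ((1 - C) / (2 * B)) ^ 2 + 2 * B * ((1 - C) / (2 * B)) * 1 + C * 1 ^ 2) with 1 by (field; auto). lra.
    + exists (-B), A. assert (A < 0) by lra. nra.
Qed.

Lemma sq_pos x : x <> 0 -> 0 < x^2.
Proof. intro H. simpl. rewrite Rmult_1_r. apply Rsqr_pos_lt; auto. Qed.

Lemma key c0 c1 c2 :
  c1^2 - 4*c0*c2 > 0 ->
  (5*c0^2 - 2*c0*c2 - c1^2 + c2^2) * (-c0^2 + 2*c0*c2 + c1^2 - 5*c2^2) < (2*c1*(c2-c0))^2.
Proof.
  intro HD.
  assert (Id : (2*c1*(c2-c0))^2 - (5*c0^2 - 2*c0*c2 - c1^2 + c2^2) * (-c0^2 + 2*c0*c2 + c1^2 - 5*c2^2)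
     = ((c1^2 - (c0+c2)^2 - 2*(c2-c0)^2) + 2*(c2-c0)^2)^2 + 4*((c2-c0)^2)^2) by ring.
  destruct (Req_EM_T (c2-c0) 0) as [Hd|Hd].
  - assert (c2 = c0) by lra. subst c2.
    assert (0 < ((c1^2 - (c0+c0)^2 - 2*(c0-c0)^2) + 2*(c0-c0)^2)^2).
    { apply sq_pos. intro. nra. }
    assert (0 <= 4*((c0-c0)^2)^2) by (apply Rmult_le_pos; [lra| apply pow2_ge_0]). lra.
  - assert (0 < ((c2-c0)^2)^2) by (apply pow_lt; apply sq_pos; auto).
    assert (0 <= ((c1^2 - (c0+c2)^2 - 2*(c2-c0)^2) + 2*(c2-c0)^2)^2) by apply pow2_ge_0. lra.
Qed.

Lemma lower3 L : honest L -> is_rep (r_lam 0) L -> (3 <= npos L)%nat.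
Proof.
  intros Hh Hr. assert (H2 := lower2 0 L ltac:(lra) Hr).
  rewrite npos_eq in *.
  assert (Hh' := FOP_filter _ posb L Hh).
  destruct (filter posb L) as [|t1 [|t2 [|t3 r]]] eqn:E; simpl in *; try lia.
  exfalso.
  inversion Hh'; subst. inversion H1; subst.
  destruct t1 as [[l1 a1] b1]. destruct t2 as [[l2 a2] b2].
  unfold alp, bet in H3; simpl in H3.
  set (c0 := b1*b2). set (c1 := -(b1*a2 + a1*b2)). set (c2 := a1*a2).
  assert (HD : c1^2 - 4*c0*c2 > 0).
  { unfold c0,c1,c2. replace ((- (b1 * a2 + a1 * b2)) ^ 2 - 4 * (b1 * b2) * (a1 * a2))
      with ((a1*b2 - a2*b1)^2) by ring. apply sq_pos; auto. }
  destruct (quad_pos _ _ _ (key c0 c1 c2 HD)) as [s [t Hq]].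
  set (u0 := s*c0). set (u1 := s*c1 + t*c0). set (u2 := s*c2 + t*c1). set (u3 := t*c2).
  apply (contra 0 L (u0^2) (2*u0*u1) (2*u0*u2 + u1^2) (2*u0*u3 + 2*u1*u2) (2*u1*u3 + u2^2) (2*u2*u3) (u3^2) Hr).
  - intros a b. unfold Hval.
    match goal with |- 0 <= ?X => replace X with ((u0*a^3 + u1*a^2*b + u2*a*b^2 + u3*b^3)^2) by ring end.
    apply pow2_ge_0.
  - rewrite E. intros tt Htt.
    assert (Hf : forall a b, Hval (u0^2) (2*u0*u1) (2*u0*u2 + u1^2) (2*u0*u3 + 2*u1*u2) (2*u1*u3 + u2^2) (2*u2*u3) (u3^2) a b
       = ((b1*a - a1*b)*(b2*a - a2*b)*(s*a+t*b))^2).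
    { intros a b. unfold Hval, u0,u1,u2,u3,c0,c1,c2. ring. }
    rewrite Hf. destruct Htt as [<-|[<-|[]]]; unfold alp, bet; simpl; ring.
  - unfold u0,u1,u2,u3. nra.
Qed.

Definition dt a b := (1-a^6)*(b-b^5) - (1-b^6)*(a-a^5).

Lemma dt_fact a b : dt a b = (1-a^2)*(1-b^2)*(b-a)*(1 + a^2 + b^2 - a*b*(a^2+b^2) - a^3*b^3).
Proof. unfold dt. ring. Qed.

Lemma dt_nz a b : 1 < a -> 1 < b -> a <> b -> dt a b <> 0.
Proof.
  intros Ha Hb Hab. rewrite dt_fact.
  assert (1 < a*b) by nra.
  assert (0 < (a*b-1)*(a^2+b^2)) by (apply Rmult_lt_0_compat; nra).
  assert (a^3*b^3 > 1) by (replace (a^3*b^3) with ((a*b)^3) by ring; apply Rlt_pow_R1; [lra| lia]).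
  assert (1 - a^2 <> 0) by nra. assert (1 - b^2 <> 0) by nra. assert (b - a <> 0) by lra.
  assert (1 + a^2 + b^2 - a*b*(a^2+b^2) - a^3*b^3 <> 0) by nra.
  repeat apply Rmult_integral_contrapositive_currified; auto.
Qed.

Definition L22 a b : list term :=
  let c1 := (b-b^5)/dt a b in let c2 := -(a-a^5)/dt a b in
  [(c1,1,a); (-c1,a,1); (c2,1,b); (-c2,b,1)].

Lemma L22_val a b x y : 1 < a -> 1 < b -> a <> b ->
  r_lam (1/5 - a*b/(a*b + (a^2+1)*(b^2+1))) x y = rep_val (L22 a b) x y.
Proof.
  intros Ha Hb Hab. assert (Hd := dt_nz a b Ha Hb Hab).
  assert (a*b + (a^2+1)*(b^2+1) <> 0) by nra.
  unfold L22, rep_val, r_lam, term_val, lam, alp, bet; simpl.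
  unfold dt in *. field. split; [exact Hd| nra].
Qed.

Definition swapL (L : list term) : list term := map (fun t => (- lam t, bet t, alp t)) L.

Lemma swap_val L x y : rep_val (swapL L) x y = - rep_val L y x.
Proof.
  induction L as [|t L IH]; unfold rep_val in *; simpl; [ring|].
  rewrite IH. unfold term_val, lam, alp, bet; simpl. ring.
Qed.

Lemma swap_rep l L : is_rep (r_lam l) L -> is_rep (r_lam l) (swapL L).
Proof.
  intros [H1 H2]. split.
  - unfold swapL. apply Forall_map. eapply Forall_impl; [|exact H1].
    intros t Ht. unfold lam at 1; simpl. lra.
  - intros x y. rewrite swap_val, <- H2. unfold r_lam. ring.
Qed.

Lemma swap_npos L : npos (swapL L) = nneg L.
Proof.
  induction L as [|t L IH]; [reflexivity|].
  unfold npos, nneg in *; simpl.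
  destruct (Rlt_dec 0 (lam (- lam t, bet t, alp t))) as [h1|h1];
  destruct (Rlt_dec (lam t) 0) as [h2|h2]; unfold lam at 1 in h1; simpl in h1;
    try (exfalso; lra); simpl; rewrite ?IH; reflexivity.
Qed.

Lemma swap_honest L : honest L -> honest (swapL L).
Proof.
  unfold honest, swapL. induction 1; simpl; constructor; auto.
  apply Forall_map. eapply Forall_impl; [|exact H].
  intros u Hu. unfold alp, bet in *; simpl. intro. apply Hu. lra.
Qed.

Lemma uniq_sig p u v :
  in_badges p u v ->
  (forall L, is_rep p L -> honest L -> (u <= npos L)%nat /\ (v <= nneg L)%nat) ->
  unique_signature p u v.
Proof.
  intros Hin Hlb. split; [split|].
  - exact Hin.
  - intros a b [L [H1 [H2 [H3 H4]]]] Ha Hb. destruct (Hlb L H1 H2). lia.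
  - intros a b [[L [H1 [H2 [H3 H4]]]] Hmin].
    destruct (Hlb L H1 H2). destruct (Hmin u v Hin) as [E1 E2]; lia.
Qed.

Lemma lb_sym l k :
  (forall L, is_rep (r_lam l) L -> honest L -> (k <= npos L)%nat) ->
  forall L, is_rep (r_lam l) L -> honest L -> (k <= npos L)%nat /\ (k <= nneg L)%nat.
Proof.
  intros H L Hr Hh. split; [auto|]. rewrite <- swap_npos.
  apply H; [apply swap_rep | apply swap_honest]; auto.
Qed.

Ltac count := unfold npos, nneg, lam; simpl;
  repeat match goal with |- context [Rlt_dec ?a ?b] =>
    destruct (Rlt_dec a b); try (exfalso; lra) end; reflexivity.

Lemma badge0 : in_badges (r_lam 0) 3 3.
Proof.
  exists [(41/20,1,0); (-41/20,0,1); (1/120,1,2); (-1/120,2,1); (1/120,1,-2); (-1/120,-2,1)].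
  split; [split|split; [|split]].
  - repeat constructor; unfold lam; simpl; lra.
  - intros x y. unfold r_lam, rep_val, term_val, lam, alp, bet; simpl. field.
  - unfold honest. repeat constructor; unfold alp, bet; simpl; lra.
  - count.
  - count.
Qed.

Lemma badge15 : in_badges (r_lam (1/5)) 1 1.
Proof.
  exists [(1,1,0); (-1,0,1)].
  split; [split|split; [|split]].
  - repeat constructor; unfold lam; simpl; lra.
  - intros x y. unfold r_lam, rep_val, term_val, lam, alp, bet; simpl. field.
  - unfold honest. repeat constructor; unfold alp, bet; simpl; lra.
  - count.
  - count.
Qed.

Lemma cnt4 c1 c2 a b : c1 <> 0 -> c2 <> 0 ->
  npos [(c1,1,a); (-c1,a,1); (c2,1,b); (-c2,b,1)] = 2%nat /\
  nneg [(c1,1,a); (-c1,a,1); (c2,1,b); (-c2,b,1)] = 2%nat.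
Proof.
  intros H1 H2.
  destruct (Rtotal_order c1 0) as [h1|[h1|h1]]; [|contradiction|];
  (destruct (Rtotal_order c2 0) as [h2|[h2|h2]]; [|contradiction|]); split; count.
Qed.

Lemma exist22_ab a b : 1 < a -> 1 < b -> a < b ->
  in_badges (r_lam (1/5 - a*b/(a*b + (a^2+1)*(b^2+1)))) 2 2.
Proof.
  intros Ha Hb Hab. assert (Hne : a <> b) by lra.
  assert (Hd := dt_nz a b Ha Hb Hne).
  assert (Hc1 : (b - b^5)/dt a b <> 0).
  { unfold Rdiv. apply Rmult_integral_contrapositive_currified; [|apply Rinv_neq_0_compat; auto].
    assert (b^5 > b) by (replace (b^5) with (b*(b^4)) by ring; assert (1 < b^4) by (apply Rlt_pow_R1; [lra|lia]); nra).
    lra. }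
  assert (Hc2 : -(a - a^5)/dt a b <> 0).
  { unfold Rdiv. apply Rmult_integral_contrapositive_currified; [|apply Rinv_neq_0_compat; auto].
    assert (a^5 > a) by (replace (a^5) with (a*(a^4)) by ring; assert (1 < a^4) by (apply Rlt_pow_R1; [lra|lia]); nra).
    lra. }
  exists (L22 a b). split; [split|split].
  - unfold L22. repeat constructor; unfold lam; simpl; auto.
    + intro E. apply Hc1. lra.
    + intro E. apply Hc2. lra.
  - intros x y. apply L22_val; auto.
  - unfold honest, L22. repeat constructor; unfold alp, bet; simpl; nra.
  - apply cnt4; auto.
Qed.

Lemma exist22 l : 0 < l < 1/5 -> in_badges (r_lam l) 2 2.
Proof.
  intros [H0 H1].
  set (a := 1 + l). set (A := a + 1/a). set (K := (4+5*l)/(1-5*l)).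
  set (B := K / A). set (s := sqrt (B^2 - 4)). set (b := (B + s)/2).
  assert (Ha : 1 < a) by (unfold a; lra).
  assert (HA2 : A - 2 = l^2/(1+l)) by (unfold A, a; field; lra).
  assert (HA2' : 0 < A - 2 < l).
  { rewrite HA2. split. apply Rdiv_lt_0_compat; nra.
    apply Rmult_lt_reg_r with (1+l); [lra|]. unfold Rdiv. rewrite Rmult_assoc, Rinv_l by lra. nra. }
  assert (HK : 25*l <= K - 4).
  { unfold K. apply Rmult_le_reg_r with (1 - 5*l); [lra|].
    replace (((4 + 5 * l) / (1 - 5 * l) - 4) * (1 - 5 * l)) with (25*l) by (field; lra). nra. }
  assert (HAK : A^2 < K) by nra.
  assert (HBA : A < B).
  { unfold B. apply Rmult_lt_reg_r with A; [lra|]. unfold Rdiv. rewrite Rmult_assoc, Rinv_l by lra. nra. }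
  assert (HB2 : 0 <= B^2 - 4) by nra.
  assert (Hs : s^2 = B^2 - 4) by (unfold s; rewrite <- Rsqr_pow2; apply Rsqr_sqrt; auto).
  assert (Hs0 : 0 <= s) by (unfold s; apply sqrt_pos).
  assert (Hb : 1 < b) by (unfold b; lra).
  assert (Hq : b^2 + 1 = B*b).
  { unfold b. replace (((B + s) / 2)^2) with ((B^2 + 2*B*s + s^2)/4) by field. rewrite Hs. field. }
  assert (Hq2 : a^2 + 1 = A*a) by (unfold A; field; lra).
  assert (HAB : A*B = K) by (unfold B; field; lra).
  assert (Hab : a < b).
  { assert ((b - a)*(a*b - 1) > 0 \/ (b - a)*(a*b-1) <= 0) as [h|h] by lra.
    - assert (a*b - 1 > 0) by nra. nra.
    - exfalso. assert ((b-a)*(a*b-1) = a*(b^2+1) - b*(a^2+1)) by ring.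
      rewrite Hq, Hq2 in H. assert (a*b*(B - A) > 0).
      { apply Rmult_lt_0_compat; [nra|lra]. } nra. }
  assert (El : 1/5 - a*b/(a*b + (a^2+1)*(b^2+1)) = l).
  { rewrite Hq, Hq2. replace (A*a*(B*b)) with ((A*B)*(a*b)) by ring. rewrite HAB.
    unfold K. field. split; [lra|].
    replace (a * b * (1 - 5 * l) + (4 + 5 * l) * (a * b)) with (5*(a*b)) by ring. nra. }
  rewrite <- El. apply exist22_ab; auto.
Qed.

Theorem mainTheorem16 :
  unique_signature (r_lam 0) 3 3 /\
  unique_signature (r_lam (1/5)) 1 1 /\
  (forall l : R, 0 < l < 1/5 -> unique_signature (r_lam l) 2 2).
Proof.
  split; [|split].
  - apply uniq_sig; [exact badge0|]. apply lb_sym. intros L Hr Hh. apply lower3; auto.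
  - apply uniq_sig; [exact badge15|]. apply lb_sym. intros L Hr _. apply (lower1 _ L Hr).
  - intros l Hl. apply uniq_sig; [apply exist22; auto|]. apply lb_sym.
    intros L Hr _. apply (lower2 l L); [lra|auto].
Qed.
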